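(* Let $\mu\in\mathcal{M}'$. Then there exists an $S$-valued process $(\mathbf{t}_n)_{n\ge1}$, possibly defined on an enlargement of the probability space carrying $(\mathbf{s}_n)_{n\ge1}$, such that: (P1) the law of the sequence $(\mathbf{t}_n)_n$ equals the law of the sequence $(\mathbf{s}_n)_n$; (P2) for each $n$, the law of the pair $(\mathbf{s}_n,\mathbf{t}_n)$ is $\mu$; (P3) for each $n$, the conditional law of $\mathbf{s}_n$ given $(\mathbf{t}_1,\dots,\mathbf{t}_n)$ is $\mu(\cdot\mid\mathbf{t}_n)$; (P4) for each $n$, conditional on $\mathbf{s}_n$, the vector $(\mathbf{t}_1,\dots,\mathbf{t}_n)$ is independent of $(\mathbf{s}_{n+1},\mathbf{s}_{n+2},\dots)$.
   Context: $S$ is a finite set and $T$ a copy of $S$. $(\mathbf{s}_n)_{n\ge1}$ is an irreducible aperiodic Markov chain on $S$ with transition function $p(\cdot\mid\cdot)$, invariant measure $m$ (full support), and $\mathbf{s}_1\sim m$. $\mathcal{M}$ is the set of probability distributions $\mu$ on $S\times T$ both of whose marginals equal $m$; $\mu(s\mid t)=\mu(s,t)/m(t)$. $\mathcal{M}'$ is the set of $\mu\in\mathcal{M}$ such that for every $(s,t)\in S\times T$, $\sum_{s'\in S}\mu(s'\mid t)p(s\mid s')=\sum_{t'\in T}\mu(s\mid t')p(t'\mid t)$. *)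

(* Defs.v *)
From HB Require Import structures.
From mathcomp Require Import all_boot all_order all_algebra.
From mathcomp Require Import all_classical all_reals all_analysis.
Set Implicit Arguments. Unset Strict Implicit. Unset Printing Implicit Defensive.
Import Order.TTheory GRing.Theory Num.Theory.
Local Open Scope classical_set_scope.
Local Open Scope ring_scope.

Section Defs.
Variables (R : realType) (S : finType).

Definition stochastic (p : S -> S -> R) : Prop :=
  (forall x y, 0 <= p x y) /\ (forall x, \sum_(y : S) p x y = 1).

Fixpoint pstep (p : S -> S -> R) (n : nat) (x y : S) : R :=
  match n with
  | 0 => (x == y)%:R
  | n'.+1 => \sum_(z : S) pstep p n' x z * p z y
  end.

Definition irreducible (p : S -> S -> R) : Prop :=
  forall x y, exists n, 0 < pstep p n x y.

Definition aperiodic (p : S -> S -> R) : Prop :=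
  forall x, forall d : nat,
    (forall n, (0 < n)%N -> 0 < pstep p n x x -> (d %| n)%N) -> d = 1%N.

Definition prob_vector (m : S -> R) : Prop :=
  (forall x, 0 <= m x) /\ \sum_(x : S) m x = 1.

Definition invariant_law (p : S -> S -> R) (m : S -> R) : Prop :=
  forall y, \sum_(x : S) m x * p x y = m y.

Definition full_support (m : S -> R) : Prop := forall x, 0 < m x.

(* mu a b = mu(s = a, t = b), a probability on S x T, T a copy of S. *)
Definition inM (m : S -> R) (mu : S -> S -> R) : Prop :=
  (forall a b, 0 <= mu a b) /\ \sum_(a : S) \sum_(b : S) mu a b = 1 /\
  (forall a, \sum_(b : S) mu a b = m a) /\ (forall b, \sum_(a : S) mu a b = m b).

Definition mu_cond (m : S -> R) (mu : S -> S -> R) (s t : S) : R := mu s t / m t.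

Definition inM' (p : S -> S -> R) (m : S -> R) (mu : S -> S -> R) : Prop :=
  inM m mu /\
  forall s t, \sum_(s' : S) mu_cond m mu s' t * p s' s
            = \sum_(t' : S) mu_cond m mu s t' * p t t'.

End Defs.

Section Proc.
Variables (d : measure_display) (Omega : measurableType d) (S : finType).

Definition cyl (X : nat -> Omega -> S) (k n : nat) (x : nat -> S) : set Omega :=
  [set w | forall i, (k <= i < k + n)%N -> X i w = x i].

Definition evt (X : nat -> Omega -> S) (n : nat) (a : S) : set Omega :=
  [set w | X n w = a].

Definition rv_process (X : nat -> Omega -> S) : Prop :=
  forall n a, measurable (evt X n a).
End Proc.

Local Open Scope ereal_scope.

(* X is a Markov chain with initial law m and transition p (indices start at 0,
   so X 0 is s_1 of the paper). *)
Definition markov_chain (R : realType) (d : measure_display) (Omega : measurableType d)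
  (P : probability Omega R) (S : finType) (m : S -> R) (p : S -> S -> R)
  (X : nat -> Omega -> S) : Prop :=
  forall n x, P (cyl X 0 n.+1 x) = (m (x 0%N) * \prod_(i < n) p (x i) (x i.+1))%:E.

(* Main.v *)
Require Import Defs.
From HB Require Import structures.
From mathcomp Require Import all_boot all_order all_algebra.
From mathcomp Require Import all_classical all_reals all_analysis.
From mathcomp Require Import ring lra.
Set Implicit Arguments. Unset Strict Implicit. Unset Printing Implicit Defensive.
Import Order.TTheory GRing.Theory Num.Theory.
Local Open Scope classical_set_scope.
Local Open Scope ring_scope.

Section SumN.
Variables (R : realType) (S : finType) (def : S).

Definition setx (x : nat -> S) (k : nat) (a : S) : nat -> S :=
  fun i => if i == k then a else x i.

Fixpoint sumN (N : nat) (F : (nat -> S) -> R) : R :=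
  match N with
  | 0 => F (fun _ => def)
  | N'.+1 => sumN N' (fun x => \sum_(a : S) F (setx x N' a))
  end.

Lemma sumN_ext N F G : (forall x, F x = G x) -> sumN N F = sumN N G.
Proof. by move=> h; rewrite (funext h). Qed.

Lemma sumN_sum N (I : finType) (f : I -> (nat -> S) -> R) :
  sumN N (fun x => \sum_(i : I) f i x) = \sum_(i : I) sumN N (f i).
Proof.
elim: N f => [//|N IH] f /=.
rewrite -IH; apply: sumN_ext => x; exact: exchange_big.
Qed.

Lemma sumN_scale N c F : sumN N (fun x => c * F x) = c * sumN N F.
Proof.
elim: N c F => [//|N IH] c F /=.
rewrite -IH; apply: sumN_ext => x; by rewrite mulr_sumr.
Qed.

Lemma setx_id x k : setx x k (x k) = x.
Proof. by apply: funext => i; rewrite /setx; case: eqP => // ->. Qed.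

Section GL.
Variables (d : measure_display) (T : measurableType d) (nu : probability T R).

Lemma fin_union_list (A : S -> set T) (l : seq S) : uniq l ->
  (forall a, measurable (A a)) -> (forall a b, a != b -> A a `&` A b = set0) ->
  measurable [set w | exists a, a \in l /\ A a w] /\
  fine (nu [set w | exists a, a \in l /\ A a w]) = \sum_(a <- l) fine (nu (A a)).
Proof.
move=> + mA dA; elim: l => [|b l IH] /=.
  have -> : [set w | exists a, a \in [::] /\ A a w] = set0.
    by apply/seteqP; split=> w //= [a []].
  by rewrite measure0 big_nil.
move=> /andP[bl ul]; have [mX fX] := IH ul.
have -> : [set w | exists a, a \in b :: l /\ A a w] =
   A b `|` [set w | exists a, a \in l /\ A a w].
  apply/seteqP; split=> w /=.
    by move=> [a []]; rewrite inE => /orP[/eqP->|al] Aw; [left|right; exists a].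
  by case=> [Abw|[a [al Aw]]]; [exists b; rewrite inE eqxx|exists a; rewrite inE al orbT].
split; first exact: measurableU.
rewrite measureU //; last first.
  apply/seteqP; split=> w // [Abw [a [al Aaw]]].
  have ab : b != a by apply: contraNneq bl => ->.
  by rewrite -(dA _ _ ab); split.
rewrite fineD ?fin_num_measure // big_cons fX //.
Qed.

Lemma fin_union (A : S -> set T) :
  (forall a, measurable (A a)) -> (forall a b, a != b -> A a `&` A b = set0) ->
  measurable [set w | exists a, A a w] /\
  fine (nu [set w | exists a, A a w]) = \sum_(a : S) fine (nu (A a)).
Proof.
move=> mA dA; have [h1 h2] := fin_union_list (enum_uniq S) mA dA.
have E : [set w | exists a, a \in enum S /\ A a w] = [set w | exists a, A a w].
  apply/seteqP; split=> w /= [a]; first by case=> _ h; exists a.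
  by move=> h; exists a; rewrite mem_enum.
rewrite -E; split => //; rewrite h2 big_enum //.
Qed.

Lemma GL k (F : (nat -> S) -> set T) :
  (forall x y, (forall i, (i < k)%N -> x i = y i) -> F x = F y) ->
  (forall x y i, (i < k)%N -> x i != y i -> F x `&` F y = set0) ->
  (forall x, measurable (F x)) ->
  measurable [set w | exists x, F x w] /\
  fine (nu [set w | exists x, F x w]) = sumN k (fun x => fine (nu (F x))).
Proof.
elim: k F => [|k IH] F Fdep Fdis Fm.
  have -> : [set w | exists x, F x w] = F (fun _ => def).
    apply/seteqP; split=> w /=; last by move=> h; exists (fun _ => def).
    by move=> [x]; rewrite (Fdep x (fun _ => def)).
  by split.
pose G x := [set w | exists a, F (setx x k a) w].
have EG : [set w | exists x, G x w] = [set w | exists x, F x w].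
  apply/seteqP; split=> w /=; first by move=> [x [a h]]; exists (setx x k a).
  by move=> [x h]; exists x, (x k); rewrite setx_id.
have Gu x : measurable (G x) /\
    fine (nu (G x)) = \sum_(a : S) fine (nu (F (setx x k a))).
  apply: fin_union => // a b ab; apply: (Fdis _ _ k) => //.
  by rewrite /setx eqxx.
have [] := IH G.
- move=> x y h.
  have e a : F (setx x k a) = F (setx y k a).
    apply: Fdep => i; rewrite ltnS leq_eqVlt /setx => /orP[/eqP->|ik].
      by rewrite eqxx.
    by rewrite (ltn_eqF ik) h.
  by apply/seteqP; split=> w /= [a Fw]; exists a; rewrite ?e // -e.
- move=> x y i ik xy; apply/seteqP; split=> w // [[a Fa] [b Fb]].
  have : F (setx x k a) `&` F (setx y k b) = set0.
    apply: (Fdis _ _ i); first exact: ltnW.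
    by rewrite /setx (ltn_eqF ik).
  by move=> E; rewrite -E; split.
- by move=> x; case: (Gu x).
rewrite EG => mU ->; split => //=; apply: sumN_ext => x; by case: (Gu x).
Qed.
End GL.
End SumN.
Lemma step_find (R : realType) (H : nat -> R) (N : nat) (u : R) :
  H 0%N <= u -> u < H N -> exists i, (i < N)%N /\ H i <= u /\ u < H i.+1.
Proof.
elim: N => [|N IH] h0 hN; first by move: (le_lt_trans h0 hN); rewrite ltxx.
case: (ltP u (H N)) => hu.
  by have [i [iN hi]] := IH h0 hu; exists i; split => //; exact: ltnW.
by exists N.
Qed.

Section Intervals.
Variables (R : realType) (S : finType) (def : S).
Variable r : nat -> (nat -> S) -> S -> S -> R.
Hypothesis r_ge0 : forall n x prev b, 0 <= r n x prev b.
Hypothesis r_sum1 : forall n x prev, \sum_(b : S) r n x prev b = 1.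

Definition Gc n x prev k := \sum_(0 <= i < k) r n x prev (nth def (enum S) i).
Definition Cum n x prev (b : S) := Gc n x prev (enum_rank b).

Lemma Gc_ge0 n x prev k : 0 <= Gc n x prev k.
Proof. by apply: sumr_ge0 => i _. Qed.

Lemma Gc_mono n x prev k k' : (k <= k')%N -> Gc n x prev k <= Gc n x prev k'.
Proof.
move=> kk; rewrite /Gc (@big_cat_nat _ _ _ k 0 k') //= lerDl.
by apply: sumr_ge0 => i _.
Qed.

Lemma GcS n x prev k : Gc n x prev k.+1 = Gc n x prev k + r n x prev (nth def (enum S) k).
Proof. by rewrite /Gc big_nat_recr. Qed.

Lemma Gc_card n x prev : Gc n x prev #|S| = 1.
Proof.
rewrite -(r_sum1 n x prev) /Gc -big_enum /= (big_nth def) cardE //.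
Qed.

Lemma Cum_next n x prev b : Cum n x prev b + r n x prev b = Gc n x prev (enum_rank b).+1.
Proof. by rewrite /Cum GcS nth_enum_rank. Qed.

Lemma Cum_le1 n x prev b : Cum n x prev b + r n x prev b <= 1.
Proof. by rewrite Cum_next -(Gc_card n x prev) Gc_mono. Qed.

Lemma Cum_ge0 n x prev b : 0 <= Cum n x prev b.
Proof. exact: Gc_ge0. Qed.

Definition pchild n x b (st : S * R * R) : S * R * R :=
  let: (prev, lo, len) := st in
  (b, lo + len * Cum n x prev b, len * r n x prev b).

Definition incond n x u (st : S * R * R) b : bool :=
  let: (prev, lo, len) := st in
  (lo + len * Cum n x prev b <= u) && (u < lo + len * Cum n x prev b + len * r n x prev b).

Definition child n x u st := pchild n x (odflt def [pick b | incond n x u st b]) st.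

Fixpoint stt n x u : S * R * R :=
  match n with 0 => (def, 0, 1) | n'.+1 => child n' x u (stt n' x u) end.

Fixpoint pst n x (y : nat -> S) : S * R * R :=
  match n with 0 => (def, 0, 1) | n'.+1 => pchild n' x (y n') (pst n' x y) end.

Definition inI (st : S * R * R) (u : R) : bool :=
  let: (_, lo, len) := st in (lo <= u) && (u < lo + len).

Lemma pick_unique n x u prev lo len b :
  0 <= len -> inI (prev, lo, len) u -> incond n x u (prev, lo, len) b ->
  odflt def [pick b | incond n x u (prev, lo, len) b] = b.
Proof.
move=> len0 _ hb; case: pickP => [b0 hb0|/(_ b)]; last by rewrite hb.
apply/eqP/negPn/negP => neq /=.
have key : forall c c', (enum_rank c < enum_rank c')%N ->
    incond n x u (prev, lo, len) c -> incond n x u (prev, lo, len) c' -> False.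
  move=> c c' lt /andP[_ h1] /andP[h2 _].
  have : lo + len * Cum n x prev c + len * r n x prev c <= lo + len * Cum n x prev c'.
    rewrite -addrA -mulrDr lerD2l ler_wpM2l // Cum_next /Cum; exact: Gc_mono.
  move=> hle; have := lt_le_trans h1 (le_trans hle h2); by rewrite ltxx.
case: (ltngtP (enum_rank b0) (enum_rank b)) => [lt|lt|eq].
- exact: key lt hb0 hb.
- exact: key lt hb hb0.
- by move: neq; have := val_inj eq; move/enum_rank_inj => ->; rewrite eqxx.
Qed.

Lemma pick_exists n x u prev lo len :
  0 <= len -> inI (prev, lo, len) u -> exists b, incond n x u (prev, lo, len) b.
Proof.
move=> len0 /andP[h1 h2].
pose H k := lo + len * Gc n x prev k.
have [i [iN [hi1 hi2]]] : exists i, (i < #|S|)%N /\ H i <= u /\ u < H i.+1.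
  apply: step_find; first by rewrite /H /Gc big_geq // mulr0 addr0.
  by rewrite /H Gc_card mulr1.
pose b := enum_val (Ordinal iN).
have rb : enum_rank b = i :> nat by rewrite /b enum_valK.
have nb : nth def (enum S) i = b by rewrite /b (enum_val_nth def).
exists b; rewrite /incond /Cum rb; apply/andP; split => //.
by move: hi2; rewrite /H GcS nb mulrDr addrA.
Qed.

Lemma pst_bounds n x y :
  let: (_, lo, len) := pst n x y in 0 <= lo /\ 0 <= len /\ lo + len <= 1.
Proof.
elim: n => [|n]; first by rewrite /= add0r lexx ler01.
rewrite /=; case: (pst n x y) => [[prev lo] len] [lo0 [len0 l1]] /=.
split; first by rewrite addr_ge0 // mulr_ge0 // Cum_ge0.
split; first by rewrite mulr_ge0.
apply: le_trans l1; rewrite -addrA lerD2l -mulrDr ler_piMr //; exact: Cum_le1.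
Qed.

Lemma child_sub n x u prev lo len b :
  0 <= len -> incond n x u (prev, lo, len) b -> inI (prev, lo, len) u.
Proof.
move=> len0 /andP[h1 h2]; apply/andP; split.
  by apply: le_trans h1; rewrite lerDl mulr_ge0 // Cum_ge0.
apply: (lt_le_trans h2); rewrite -addrA lerD2l -mulrDr ler_piMr //; exact: Cum_le1.
Qed.

Lemma path_char x u y n :
  0 <= u < 1 ->
  ((forall i, (i < n)%N -> (stt i.+1 x u).1.1 = y i) <-> inI (pst n x y) u) /\
  (inI (pst n x y) u -> stt n x u = pst n x y).
Proof.
move=> u01; elim: n => [|n [IH1 IH2]].
  by split => //; split => // _; rewrite /= add0r.
have hb := pst_bounds n x y.
rewrite [pst n.+1 x y]/=.
case E1 : (pst n x y) hb IH1 IH2 => [[prev lo] len] [lo0 [len0 l1]] IH1 IH2.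
have inc : inI (pchild n x (y n) (prev, lo, len)) u = incond n x u (prev, lo, len) (y n).
  by [].
rewrite inc.
split; last first.
  move=> hc; have hI := child_sub len0 hc.
  by rewrite /= (IH2 hI) /child (pick_unique len0 hI hc).
split.
  move=> h; have hI : inI (prev, lo, len) u.
    by apply/IH1 => i ilt; apply: h; exact: ltnW.
  have := h n (ltnSn n); rewrite /= (IH2 hI) /child.
  have [b hb] := @pick_exists n x u _ _ _ len0 hI.
  by rewrite (pick_unique len0 hI hb) /= => <-.
move=> hc; have hI := child_sub len0 hc.
move=> i; rewrite ltnS leq_eqVlt => /orP[/eqP->|ilt]; last exact: (proj2 IH1 hI).
by rewrite /= (IH2 hI) /child (pick_unique len0 hI hc).
Qed.


Definition tf n x u := if (0 <= u) && (u < 1) then (stt (n.+1) x u).1.1 else def.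

Definition PS n x y := [set u : R | forall i, (i < n)%N -> tf i x u = y i].

Definition lenp n x y := (pst n x y).2.
Definition lop n x y := (pst n x y).1.2.

Lemma lenp_ge0 n x y : 0 <= lenp n x y.
Proof. by have := pst_bounds n x y; rewrite /lenp; case: (pst n x y) => [[? ?] ?] [? []]. Qed.

Lemma PS_eq n x y : PS n x y =
  [set` `[lop n x y, lop n x y + lenp n x y[%R] `|`
  ([set u : R | ~ ((0 <= u) && (u < 1))] `&` [set _ | forall i, (i < n)%N -> def = y i]).
Proof.
have hb := pst_bounds n x y; have pc u := @path_char x u y n.
rewrite /lop /lenp; move: pc; case E : (pst n x y) hb => [[prev lo] len] [lo0 [len0 l1]] /= pc.
apply/seteqP; split=> u /=.
  move=> h; case: (boolP ((0 <= u) && (u < 1))) => u01.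
    left; rewrite in_itv /=; apply/(proj1 (pc u u01)) => i ilt.
    by have := h i ilt; rewrite /tf u01.
  right; split => // i ilt; rewrite -(h i ilt) /tf.
  by case: ifP u01 => // ->.
case=> [|[u01 h] i ilt]; last by rewrite /tf; case: ifP => hu; [case: u01; rewrite hu|exact: h].
rewrite in_itv /= => /andP[h1 h2].
have u01 : (0 <= u) && (u < 1).
  by rewrite (le_trans lo0 h1) (lt_le_trans h2 l1).
move=> i ilt; rewrite /tf u01; exact: (proj2 (proj1 (pc u u01)) (introT andP (conj h1 h2))).
Qed.

Lemma measurable_cstP (P : Prop) : measurable [set _ : R | P].
Proof.
case: (pselect P) => hP.
  by have -> : [set _ : R | P] = setT by apply/seteqP; split.
by have -> : [set _ : R | P] = set0 by apply/seteqP; split.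
Qed.

Lemma PS_meas n x y : measurable (PS n x y).
Proof.
rewrite PS_eq; apply: measurableU; first exact: measurable_itv.
apply: measurableI; last exact: measurable_cstP.
have -> : [set u : R | ~ ((0 <= u) && (u < 1))] = ~` [set` `[(0:R), 1[%R].
  by apply/seteqP; split=> u /=; rewrite in_itv.
apply: measurableC; exact: measurable_itv.
Qed.

Definition Uni := uniform_prob (@ltr01 R).

Lemma UniE (A : set R) : measurable A -> Uni A = lebesgue_measure (A `&` `[0%R, 1%R]).
Proof.
move=> mA. rewrite /Uni /uniform_prob integral_uniform_pdf.
rewrite (eq_integral (cst 1%E)); last first.
  move=> z; rewrite inE => -[_]; rewrite /= in_itv /= /uniform_pdf => ->.
  by rewrite subr0 invr1.
rewrite integral_cst ?mul1e //. exact: measurableI.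
Qed.

Lemma Uni_PS n x y : Uni (PS n x y) = (lenp n x y)%:E.
Proof.
rewrite UniE; last exact: PS_meas.
have hb := pst_bounds n x y; move: hb; rewrite PS_eq /lop /lenp.
case: (pst n x y) => [[prev lo] len] [lo0 [len0 l1]] /=.
set J := (X in _ `|` X).
have mJ : measurable J.
  apply: measurableI; last exact: measurable_cstP.
  have -> : [set u : R | ~ ((0 <= u) && (u < 1))] = ~` [set` `[(0:R), 1[%R].
    by apply/seteqP; split=> u /=; rewrite in_itv.
  apply: measurableC; exact: measurable_itv.
have sub : [set` `[lo, lo + len[%R] `<=` `[0%R, 1%R].
  move=> u; rewrite /= !in_itv /= => /andP[h1 h2].
  by rewrite (le_trans lo0 h1) /= ltW // (lt_le_trans h2 l1).
have dis : [set` `[lo, lo + len[%R] `&` (J `&` `[0%R, 1%R]) = set0.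
  apply/seteqP; split=> u // [+ [[+ _] _]]; rewrite /= in_itv /= => /andP[h1 h2].
  by rewrite (le_trans lo0 h1) (lt_le_trans h2 l1).
have mI : measurable [set` `[lo, lo + len[%R] by exact: measurable_itv.
have mJ1 : measurable (J `&` `[0%R, 1%R]).
  by apply: measurableI => //; exact: measurable_itv.
have subJ : J `&` `[0%R, 1%R] `<=` [set 1%R].
  move=> u [[/= u01 _]]; rewrite in_itv /= => /andP[h1 h2].
  apply/eqP; rewrite eq_le h2 /= leNgt; apply/negP => lt.
  by apply: u01; rewrite h1 lt.
rewrite setIUl (setIidl sub) measureU //.
rewrite (@subset_measure0 _ _ _ lebesgue_measure _ _ mJ1 (measurable_set1 1%R) subJ (lebesgue_measure_set1 1%R)).
rewrite adde0; apply: eq_trans (lebesgue_measure_itv _) _ => /=; rewrite lte_fin.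
case: (ltP lo (lo + len)) => h.
  by rewrite -EFinB addrC addKr.
have -> : len = 0 by apply/eqP; rewrite eq_le len0 andbT -(lerD2l lo) addr0.
by [].
Qed.


Lemma pst_prev n x y : (pst n.+1 x y).1.1 = y n.
Proof. by rewrite /=; case: (pst n x y) => [[? ?] ?]. Qed.

Lemma lenp1 x y : lenp 1 x y = r 0 x def (y 0%N).
Proof. by rewrite /lenp /= /pchild /= mul1r. Qed.

Lemma lenpS n x y : lenp n.+2 x y = lenp n.+1 x y * r n.+1 x (y n) (y n.+1).
Proof.
have := pst_prev n x y; rewrite /lenp.
change (pst n.+2 x y) with (pchild n.+1 x (y n.+1) (pst n.+1 x y)).
by case: (pst n.+1 x y) => [[? ?] ?] /= ->.
Qed.

Section Dep.
Hypothesis r_dep : forall n x x', x n = x' n -> r n x = r n x'.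

Lemma stt_dep n x x' u : (forall i, (i < n)%N -> x i = x' i) -> stt n x u = stt n x' u.
Proof.
elim: n => [//|n IH] h /=.
rewrite IH; last by move=> i ilt; apply: h; exact: ltnW.
by rewrite /child /pchild /incond /Cum /Gc (r_dep (h n (ltnSn n))).
Qed.

Lemma pst_dep n x x' y y' : (forall i, (i < n)%N -> x i = x' i) ->
  (forall i, (i < n)%N -> y i = y' i) -> pst n x y = pst n x' y'.
Proof.
elim: n => [//|n IH] h h' /=.
rewrite IH; first last.
- by move=> i ilt; apply: h'; exact: ltnW.
- by move=> i ilt; apply: h; exact: ltnW.
by rewrite /pchild /Cum /Gc (r_dep (h n (ltnSn n))) (h' n (ltnSn n)).
Qed.

Lemma PS_dep n x x' y : (forall i, (i < n)%N -> x i = x' i) -> PS n x y = PS n x' y.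
Proof.
move=> h; apply/seteqP; split=> u /= H i ilt; rewrite -(H i ilt) /tf;
  by rewrite (@stt_dep i.+1 x x') // => j jlt; apply: h; exact: leq_trans jlt ilt.
Qed.

Lemma lenp_dep n x x' y y' : (forall i, (i < n)%N -> x i = x' i) ->
  (forall i, (i < n)%N -> y i = y' i) -> lenp n x y = lenp n x' y'.
Proof. by move=> h h'; rewrite /lenp (pst_dep h h'). Qed.
End Dep.

End Intervals.


Section Alg.
Variables (R : realType) (S : finType) (p : S -> S -> R) (m : S -> R) (mu : S -> S -> R) (def : S).
Hypotheses (hp : stochastic p) (hm : prob_vector m) (hfull : full_support m)
  (hinv : invariant_law p m) (hmu : inM' p m mu).

Definition cden (prev s : S) := \sum_(b' : S) p prev b' * mu_cond m mu s b'.
Definition rq (s prev b : S) :=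
  if cden prev s == 0 then p prev b else p prev b * mu_cond m mu s b / cden prev s.
Definition rr n (x : nat -> S) (prev b : S) :=
  if n is 0 then mu (x 0%N) b / m (x 0%N) else rq (x n) prev b.

Lemma mu_row a : \sum_(b : S) mu a b = m a.
Proof. by move: hmu => [[_ [_ [h _]]] _]. Qed.
Lemma mu_col b : \sum_(a : S) mu a b = m b.
Proof. by move: hmu => [[_ [_ [_ h]]] _]. Qed.
Lemma mu_M' s t : \sum_(s' : S) mu_cond m mu s' t * p s' s
            = \sum_(t' : S) mu_cond m mu s t' * p t t'.
Proof. by move: hmu => [_ h]; exact: h. Qed.

Lemma m_neq0 a : m a != 0. Proof. by rewrite gt_eqF // hfull. Qed.
Lemma mu_ge0 a b : 0 <= mu a b. Proof. by case: hmu => -[h _] _; exact: h. Qed.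
Lemma mucond_ge0 a b : 0 <= mu_cond m mu a b.
Proof. by rewrite /mu_cond divr_ge0 ?mu_ge0 // ltW // hfull. Qed.
Lemma p_ge0 a b : 0 <= p a b. Proof. by case: hp => h _; exact: h. Qed.
Lemma cden_ge0 prev s : 0 <= cden prev s.
Proof. by apply: sumr_ge0 => b _; rewrite mulr_ge0 ?p_ge0 ?mucond_ge0. Qed.

Lemma rr_ge0 n x prev b : 0 <= rr n x prev b.
Proof.
case: n => [|n] /=; first by rewrite divr_ge0 ?mu_ge0 // ltW // hfull.
rewrite /rq; case: ifP => _; first exact: p_ge0.
by rewrite divr_ge0 ?cden_ge0 // mulr_ge0 ?p_ge0 ?mucond_ge0.
Qed.

Lemma rr_sum1 n x prev : \sum_(b : S) rr n x prev b = 1.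
Proof.
case: n => [|n] /=.
  by rewrite -mulr_suml mu_row mulfV ?m_neq0.
rewrite /rq; have [c0|c0] := eqVneq (cden prev (x n.+1)) 0.
  by case: hp.
by rewrite -mulr_suml mulfV.
Qed.

Lemma rr_dep n x x' : x n = x' n -> rr n x = rr n x'.
Proof. by case: n => [|n] h; rewrite /rr h. Qed.

Lemma sumNS N (F : (nat -> S) -> R) :
  sumN def N.+1 F = sumN def N (fun x => \sum_(a : S) F (setx x N a)).
Proof. by []. Qed.

Definition Mt n (y : nat -> S) := m (y 0%N) * \prod_(i < n) p (y i) (y i.+1).
Definition Q n x y := lenp def rr n.+1 x y.
Definition g n a y := sumN def n.+1 (fun x => Mt n x * (x n == a)%:R * Q n x y).

Lemma MtS n y : Mt n.+1 y = Mt n y * p (y n) (y n.+1).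
Proof. by rewrite /Mt big_ord_recr /= mulrA. Qed.

Lemma setx_at (x : nat -> S) k (b : S) : setx x k b k = b.
Proof. by rewrite /setx eqxx. Qed.
Lemma setx_ne (x : nat -> S) k (b : S) i : i != k -> setx x k b i = x i.
Proof. by rewrite /setx => /negbTE ->. Qed.

Lemma Mt_setx n (x : nat -> S) b : Mt n (setx x n.+1 b) = Mt n x.
Proof.
rewrite /Mt setx_ne //; congr (_ * _); apply: eq_bigr => i _.
rewrite !setx_ne // ?neq_ltn ?ltnS ?ltn_ord //.
by rewrite ltnW // ltn_ord.
Qed.

Lemma sum_mucond t : \sum_a mu_cond m mu a t = 1.
Proof.
by rewrite /mu_cond -mulr_suml mu_col mulfV ?m_neq0.
Qed.

Lemma Q_setx n x b y : Q n (setx x n.+1 b) y = Q n x y.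
Proof.
apply: lenp_dep => // [|i ilt]; first exact: rr_dep.
by rewrite setx_ne // neq_ltn ilt.
Qed.

Lemma sum_ind (F : S -> R) c : \sum_(a : S) (c == a)%:R * F a = F c.
Proof.
rewrite (bigD1 c) //= eqxx mul1r big1 ?addr0 // => a ac.
by rewrite eq_sym (negbTE ac) mul0r.
Qed.

Lemma g_eq n a y : g n a y = mu_cond m mu a (y n) * Mt n y.
Proof.
elim: n a => [|n IH] a.
  rewrite /g /=.
  under eq_bigr => b _ do rewrite /Q lenp1 /Mt !big_ord0 !mulr1 /= setx_at.
  rewrite /Mt big_ord0 mulr1.
  rewrite (bigD1 a) //= eqxx big1 ?addr0; last first.
    by move=> b ba; rewrite (negbTE ba) mulr0 mul0r.
  rewrite /mu_cond mulr1; field; apply/andP; split; exact: m_neq0.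
set K := rq a (y n) (y n.+1).
have E1 x : \sum_(b : S) (Mt n.+1 (setx x n.+1 b) * (setx x n.+1 b n.+1 == a)%:R
       * Q n.+1 (setx x n.+1 b) y) =
    \sum_(c : S) (Mt n x * (x n == c)%:R * Q n x y) * (p c a * K).
  have e b : Mt n.+1 (setx x n.+1 b) * (setx x n.+1 b n.+1 == a)%:R
       * Q n.+1 (setx x n.+1 b) y = Mt n x * p (x n) b * (b == a)%:R * (Q n x y * rq b (y n) (y n.+1)).
    rewrite MtS Mt_setx setx_at setx_ne ?(ltn_eqF (ltnSn n)) // /Q lenpS -/(Q n _ y) Q_setx.
    by rewrite /rr setx_at.
  under eq_bigr => b _ do rewrite e.
  rewrite (bigD1 a) //= eqxx big1 ?addr0; last first.
    by move=> b ba; rewrite (negbTE ba) mulr0 mul0r.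
  under [RHS]eq_bigr => c _ do rewrite (mulrC (Mt n x)) -!mulrA.
  rewrite sum_ind /K /Mt /= mulr1; ring.
rewrite /g sumNS (sumN_ext def _ E1) sumN_sum.
under eq_bigr => c _ do rewrite (sumN_ext def _ (fun x => mulrC _ _)) sumN_scale -/(g n c y) IH.
have cd : \sum_(c : S) mu_cond m mu c (y n) * p c a = cden (y n) a.
  rewrite mu_M' /cden; apply: eq_bigr => t _; exact: mulrC.
transitivity (Mt n y * K * cden (y n) a).
  rewrite -cd mulr_sumr; apply: eq_bigr => c _; ring.
rewrite MtS /K /rq; case: ifPn => [/eqP c0|c0].
  rewrite c0 mulr0.
  have : p (y n) (y n.+1) * mu_cond m mu a (y n.+1) = 0.
    move/eqP: c0; rewrite /cden psumr_eq0; last first.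
      by move=> b _; rewrite mulr_ge0 ?p_ge0 ?mucond_ge0.
    by move/allP/(_ (y n.+1)); rewrite mem_index_enum => /(_ isT) /eqP.
  by move=> h; rewrite mulrC -mulrA h mulr0.
field; exact: c0.
Qed.

Lemma total n y : sumN def n.+1 (fun x => Mt n x * Q n x y) = Mt n y.
Proof.
have E x : Mt n x * Q n x y = \sum_(a : S) Mt n x * (x n == a)%:R * Q n x y.
  rewrite -[LHS](sum_ind (fun _ => Mt n x * Q n x y) (x n)).
  by apply: eq_bigr => a _; ring.
rewrite (sumN_ext def _ E) sumN_sum.
under eq_bigr => a _ do rewrite -/(g n a y) g_eq.
by rewrite -mulr_suml sum_mucond mul1r.
Qed.

Lemma IV n b : sumN def n (fun x => Mt n (setx x n b)) = m b.
Proof.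
elim: n b => [|n IH] b; first by rewrite /= /Mt big_ord0 mulr1 setx_at.
rewrite sumNS.
have E x : \sum_(c : S) Mt n.+1 (setx (setx x n c) n.+1 b) =
    \sum_(c : S) Mt n (setx x n c) * p c b.
  apply: eq_bigr => c _.
  by rewrite MtS Mt_setx setx_at setx_ne ?(ltn_eqF (ltnSn n)) // setx_at.
rewrite (sumN_ext def _ E) sumN_sum.
under eq_bigr => c _ do rewrite (sumN_ext def _ (fun x => mulrC _ _)) sumN_scale IH.
rewrite -(hinv b); apply: eq_bigr => c _; exact: mulrC.
Qed.



Section Main.
Variables (d0 : measure_display) (Omega0 : measurableType d0) (P0 : probability Omega0 R).
Variable (s0 : nat -> Omega0 -> S).
Hypotheses (hs0 : rv_process s0) (hmc : markov_chain P0 m p s0).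

Local Notation PP := (P0 \x (@Uni R))%E.
Definition SP (w : Omega0) : nat -> S := fun i => s0 i w.

Lemma cyl_meas N x : measurable (cyl s0 0 N x).
Proof.
elim: N => [|N IH].
  by have -> : cyl s0 0 0 x = setT by apply/seteqP; split=> w //= _ i; rewrite ltn0 andbF.
have -> : cyl s0 0 N.+1 x = cyl s0 0 N x `&` evt s0 N (x N).
  apply/seteqP; split=> w /=.
    move=> h; split.
      by move=> i /andP[_ iN]; apply: h; rewrite leq0n add0n /= ltnS ltnW.
    by apply: h; rewrite leq0n add0n /= ltnS leqnn.
  move=> [h1 h2] i /andP[_]; rewrite add0n ltnS leq_eqVlt => /orP[/eqP->//|iN].
  by apply: h1; rewrite add0n iN.
exact: measurableI.
Qed.

Lemma Pcyl N x : fine (P0 (cyl s0 0 N.+1 x)) = Mt N x.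
Proof. by rewrite hmc. Qed.

Lemma fin0 (A : set Omega0) : measurable A -> P0 A \is a fin_num.
Proof. by move=> mA; exact: fin_num_measure. Qed.

Lemma OL (A : set Omega0) N (G : (nat -> S) -> set R) : measurable A ->
  (forall x x', (forall i, (i < N)%N -> x i = x' i) -> G x = G x') ->
  (forall x, measurable (G x)) ->
  measurable [set w : Omega0 * R | A w.1 /\ G (SP w.1) w.2] /\
  fine (PP [set w | A w.1 /\ G (SP w.1) w.2]) =
    sumN def N (fun x => fine (P0 (A `&` cyl s0 0 N x)) * fine (@Uni R (G x))).
Proof.
move=> mA Gdep Gm.
pose F x := (A `&` cyl s0 0 N x) `*` G x.
have cdep x x' : (forall i, (i < N)%N -> x i = x' i) -> cyl s0 0 N x = cyl s0 0 N x'.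
  move=> h; apply/seteqP; split=> w /= H i iN;
    have iN' : (i < N)%N by case/andP: iN; rewrite add0n.
    by rewrite -h // H.
  by rewrite h // H.
have [] := @GL R S def _ _ PP N F.
- by move=> x x' h; rewrite /F (cdep _ _ h) (Gdep _ _ h).
- move=> x x' i iN xx; apply/seteqP; split=> w // [[[_ h1] _] [[_ h2] _]].
  by move: xx; rewrite -(h1 i) ?(h2 i) ?eqxx.
- by move=> x; apply: measurableX; [apply: measurableI; [exact: mA|exact: cyl_meas]|exact: Gm].
have -> : [set w | exists x, F x w] = [set w : Omega0 * R | A w.1 /\ G (SP w.1) w.2].
  apply/seteqP; split=> w /=.
    move=> [x [[Aw cw] Gw]]; split => //.
    by rewrite (Gdep (SP w.1) x) // => i iN; apply: cw.
  by move=> [Aw Gw]; exists (SP w.1); split.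
move=> mU ->; split => //; apply: sumN_ext => x.
have mAc : measurable (A `&` cyl s0 0 N x) by apply: measurableI => //; exact: cyl_meas.
transitivity (fine (P0 (A `&` cyl s0 0 N x) * @Uni R (G x))%E).
  by congr (fine _); apply: product_measure1E => //; exact: Gm.
rewrite fineM //; first exact: fin0.
by apply: fin_num_measure; exact: Gm.
Qed.


Lemma cylg_meas j k z : measurable (cyl s0 j k z).
Proof.
elim: k => [|k IH].
  have -> : cyl s0 j 0 z = setT.
    apply/seteqP; split=> w // _; rewrite /cyl /= => i; rewrite addn0 => /andP[h1 h2].
    by move: (leq_trans h2 h1); rewrite ltnn.
  by [].
have -> : cyl s0 j k.+1 z = cyl s0 j k z `&` evt s0 (j + k) (z (j + k)).
  apply/seteqP; split=> w /=.
    move=> h; split.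
      by move=> i /andP[h1 h2]; apply: h; rewrite h1 addnS ltnW // ltnS.
    by apply: h; rewrite leq_addr addnS ltnS leqnn.
  move=> [h1 h2] i /andP[hi]; rewrite addnS ltnS leq_eqVlt => /orP[/eqP->//|iN].
  by apply: h1; rewrite hi iN.
exact: measurableI.
Qed.

Definition tt n (w : Omega0 * R) := tf def rr n (SP w.1) w.2.
Definition ss n (w : Omega0 * R) := s0 n w.1.

Lemma fst_meas : measurable_fun setT (@fst Omega0 R).
Proof. exact: measurable_fst. Qed.

Lemma push (A : set Omega0) : measurable A -> PP (fst @^-1` A) = P0 A.
Proof.
move=> mA; have -> : fst @^-1` A = A `*` (@setT R).
  by apply/seteqP; split=> w /=; [move=> h; split|case].
transitivity (P0 A * @Uni R setT)%E; first exact: product_measure1E.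
have h1 : @Uni R setT = 1%E by exact: probability_setT.
by rewrite h1 mule1.
Qed.

Lemma PP_fin E : measurable E -> PP E = (fine (PP E))%:E.
Proof.
by move=> mE; rewrite fineK //; exact: (@fin_num_measure _ _ _ (PP : probability _ R) E mE).
Qed.

Lemma P0_fin (E : set Omega0) : measurable E -> P0 E = (fine (P0 E))%:E.
Proof. by move=> mE; rewrite fineK //; exact: fin_num_measure. Qed.

Lemma Gdep_if n a y x x' : (forall i, (i < n.+1)%N -> x i = x' i) ->
  (if x n == a then PS def rr n.+1 x y else set0) =
  (if x' n == a then PS def rr n.+1 x' y else set0).
Proof.
move=> h; rewrite (h n (ltnSn n)) (PS_dep def rr_dep y h) //.
Qed.

Lemma Gm_if n a y x : measurable (if x n == a then PS def rr n.+1 x y else set0).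
Proof. by case: ifP => _ //; exact: PS_meas rr_ge0 rr_sum1 _ _ _. Qed.

Lemma Uni_if n a y x : fine (@Uni R (if x n == a then PS def rr n.+1 x y else set0))
  = (x n == a)%:R * Q n x y.
Proof.
case: ifP => _; last by rewrite (_ : @Uni R set0 = 0%E) ?mul0r //; exact: measure0.
by rewrite (Uni_PS def rr_ge0 rr_sum1) mul1r.
Qed.

Lemma EA (A : set Omega0) n a y : measurable A ->
  measurable [set w : Omega0 * R | A w.1 /\
     (if SP w.1 n == a then PS def rr n.+1 (SP w.1) y else set0) w.2] /\
  fine (PP [set w : Omega0 * R | A w.1 /\
     (if SP w.1 n == a then PS def rr n.+1 (SP w.1) y else set0) w.2]) =
  sumN def n.+1 (fun x => fine (P0 (A `&` cyl s0 0 n.+1 x)) * ((x n == a)%:R * Q n x y)).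
Proof.
move=> mA; have [h1 h2] := OL (G := fun x => if x n == a then PS def rr n.+1 x y else set0)
  (N := n.+1) mA (@Gdep_if n a y) (@Gm_if n a y).
split => //; rewrite h2; apply: sumN_ext => x; by rewrite Uni_if.
Qed.

Lemma EB (A : set Omega0) n y : measurable A ->
  measurable [set w : Omega0 * R | A w.1 /\ PS def rr n.+1 (SP w.1) y w.2] /\
  fine (PP [set w : Omega0 * R | A w.1 /\ PS def rr n.+1 (SP w.1) y w.2]) =
  sumN def n.+1 (fun x => fine (P0 (A `&` cyl s0 0 n.+1 x)) * Q n x y).
Proof.
move=> mA; have [h1 h2] := OL (G := fun x => PS def rr n.+1 x y)
  (N := n.+1) mA (fun x x' h => PS_dep def rr_dep y h) (fun x => PS_meas def rr_ge0 rr_sum1 _ _ _).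
split => //; rewrite h2; apply: sumN_ext => x.
by rewrite (Uni_PS def rr_ge0 rr_sum1).
Qed.

Lemma cylt_eq n y : cyl tt 0 n.+1 y = [set w : Omega0 * R | setT w.1 /\ PS def rr n.+1 (SP w.1) y w.2].
Proof.
apply/seteqP; split=> w /=.
  by move=> h; split => // i ilt; apply: h; rewrite leq0n add0n.
by move=> [_ h] i /andP[_]; rewrite add0n => ilt; apply: h.
Qed.

Lemma cylt_meas n y : measurable (cyl tt 0 n.+1 y).
Proof. by rewrite cylt_eq; case: (EB n y (@measurableT _ Omega0)). Qed.

Lemma cylt_P n y : fine (PP (cyl tt 0 n.+1 y)) = Mt n y.
Proof.
rewrite cylt_eq; case: (EB n y (@measurableT _ Omega0)) => _ ->.
rewrite -(total n y); apply: sumN_ext => x; by rewrite setTI Pcyl.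
Qed.

Lemma cylt_PE n y : PP (cyl tt 0 n.+1 y) = (Mt n y)%:E.
Proof. by rewrite (PP_fin (cylt_meas n y)) cylt_P. Qed.

Lemma P3set n a y : evt ss n a `&` cyl tt 0 n.+1 y =
  [set w : Omega0 * R | setT w.1 /\
     (if SP w.1 n == a then PS def rr n.+1 (SP w.1) y else set0) w.2].
Proof.
apply/seteqP; split=> w /=.
  move=> [e h]; rewrite /evt /ss /= in e; rewrite /SP e eqxx; split => // i ilt; apply: h.
move=> [_]; rewrite /SP; case: eqP => [e h|_ []]; split; first exact: e.
by move=> i /andP[_]; rewrite add0n => ilt; apply: h.
Qed.

Lemma P3_meas n a y : measurable (evt ss n a `&` cyl tt 0 n.+1 y).
Proof. by rewrite P3set; case: (EA n a y (@measurableT _ Omega0)). Qed.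

Lemma P3_P n a y : fine (PP (evt ss n a `&` cyl tt 0 n.+1 y)) = g n a y.
Proof.
rewrite P3set; case: (EA n a y (@measurableT _ Omega0)) => _ ->.
rewrite /g; apply: sumN_ext => x; by rewrite setTI Pcyl mulrA.
Qed.


Lemma cyl_dep (X : nat -> Omega0 * R -> S) N x x' :
  (forall i, (i < N)%N -> x i = x' i) -> cyl X 0 N x = cyl X 0 N x'.
Proof.
move=> h; apply/seteqP; split=> w /= H i iN;
  have iN' : (i < N)%N by case/andP: iN; rewrite add0n.
  by rewrite -h // H.
by rewrite h // H.
Qed.

Lemma cyl0 (X : nat -> Omega0 * R -> S) x : cyl X 0 0 x = setT.
Proof. by apply/seteqP; split=> w // _ i; rewrite add0n ltn0 andbF. Qed.

Lemma ss_meas n a : measurable (evt ss n a).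
Proof.
have := fst_meas measurableT (hs0 n a); rewrite setTI; exact.
Qed.

Lemma P3_PE n a y : PP (evt ss n a `&` cyl tt 0 n.+1 y) = (g n a y)%:E.
Proof. by rewrite (PP_fin (P3_meas n a y)) P3_P. Qed.

Lemma tt_union (B : set (Omega0 * R)) n b : measurable B ->
  (forall y, measurable (B `&` cyl tt 0 n.+1 (setx y n b))) ->
  measurable (B `&` evt tt n b) /\
  fine (PP (B `&` evt tt n b)) = sumN def n (fun y => fine (PP (B `&` cyl tt 0 n.+1 (setx y n b)))).
Proof.
move=> mB mF.
have [] := @GL R S def _ _ (PP : probability _ R) n (fun y => B `&` cyl tt 0 n.+1 (setx y n b)).
- move=> y y' h; congr (_ `&` _); apply: cyl_dep => i.
  rewrite ltnS leq_eqVlt => /orP[/eqP->|ilt]; first by rewrite !setx_at.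
  by rewrite !setx_ne ?(ltn_eqF ilt) // h.
- move=> y y' i ilt yy; apply/seteqP; split=> w // [[_ h1] [_ h2]].
  have hi : (0 <= i < 0 + n.+1)%N by rewrite leq0n add0n ltnS ltnW.
  move: (h1 i hi) (h2 i hi); rewrite !setx_ne ?(ltn_eqF ilt) // => -> e.
  by move: yy; rewrite e eqxx.
- exact: mF.
have -> : [set w | exists y, (B `&` cyl tt 0 n.+1 (setx y n b)) w] = B `&` evt tt n b.
  apply/seteqP; split=> w /=.
    move=> [y [Bw h]]; split => //; rewrite /evt /= -(setx_at y n b); apply: h.
    by rewrite leq0n add0n ltnS leqnn.
  move=> [Bw e]; exists (fun i => tt i w); split => // i /andP[_]; rewrite add0n ltnS.
  rewrite leq_eqVlt => /orP[/eqP->|ilt]; first by rewrite setx_at.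
  by rewrite setx_ne ?(ltn_eqF ilt).
by [].
Qed.

Lemma tt_rv : rv_process tt.
Proof.
move=> n b; rewrite -(setTI (evt tt n b)).
have [] := @tt_union setT n b measurableT => // y; rewrite setTI; exact: cylt_meas.
Qed.

Lemma P1 n x : PP (cyl tt 0 n x) = PP (cyl ss 0 n x).
Proof.
case: n => [|n]; first by rewrite !cyl0.
apply: eq_trans (cylt_PE n x) _.
symmetry; apply: eq_trans (push (cyl_meas n.+1 x)) _; exact: hmc.
Qed.

Lemma P2 n a b : PP (evt ss n a `&` evt tt n b) = (mu a b)%:E.
Proof.
have [h1 h2] := @tt_union (evt ss n a) n b (ss_meas n a) (fun y => P3_meas n a _).
rewrite (PP_fin h1) h2.
under sumN_ext do rewrite P3_P g_eq setx_at.
rewrite sumN_scale IV /mu_cond mulrAC -mulrA mulfV ?mulr1 //; exact: m_neq0.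
Qed.

Lemma P3 n a y : PP (evt ss n a `&` cyl tt 0 n.+1 y)
                   = ((mu_cond m mu a (y n))%:E * PP (cyl tt 0 n.+1 y))%E.
Proof.
rewrite P3_PE g_eq cylt_PE.
by rewrite EFinM.
Qed.

Definition vz n (z : nat -> S) (c : S) j := if (j < n.+1)%N then c else z j.
Definition W n k z c := \prod_(i < k) p (vz n z c (n + i)) (vz n z c (n + i).+1).
Definition mg n (x z : nat -> S) j := if (j < n.+1)%N then x j else z j.

Lemma cyl_merge n k z x :
  cyl s0 n.+1 k z `&` cyl s0 0 n.+1 x = cyl s0 0 (n + k).+1 (mg n x z).
Proof.
apply/seteqP; split=> w /=.
  move=> [h1 h2] i /andP[_]; rewrite add0n => ilt; rewrite /mg.
  case: ltnP => hi; first by apply: h2; rewrite leq0n add0n.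
  by apply: h1; rewrite hi /= addSn.
move=> h; split=> i /andP[hi1 hi2].
  have hn : (i < n.+1)%N = false by rewrite ltnNge hi1.
  have := h i; rewrite /mg hn; apply.
  by rewrite leq0n add0n -addSn.
have := h i; rewrite /mg; rewrite add0n in hi2; rewrite hi2; apply.
by rewrite leq0n add0n ltnS -ltnS (leq_trans hi2) // ltnS leq_addr.
Qed.

Lemma Mt_merge n k x z : Mt (n + k) (mg n x z) = Mt n x * W n k z (x n).
Proof.
rewrite /Mt big_split_ord /= -mulrA; congr (_ * (_ * _)).
- apply: eq_bigr => i _ /=; rewrite /mg ltnS ltnW ?ltn_ord //.
  by rewrite ltnS ltn_ord.
- apply: eq_bigr => i _ /=; rewrite /mg /vz.
  have e1 : ((n + i).+1 < n.+1)%N = false by rewrite ltnS ltnNge leq_addr.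
  rewrite e1; case: (ltnP (n + i) n.+1) => h //.
  have -> : (n + i)%N = n by apply/eqP; rewrite eqn_leq leq_addr andbT -ltnS.
  by [].
Qed.

Lemma Pev n k z a : measurable (evt s0 n a `&` cyl s0 n.+1 k z) /\
  fine (P0 (evt s0 n a `&` cyl s0 n.+1 k z)) = m a * W n k z a.
Proof.
have [] := @GL R S def _ _ P0 n (fun x => cyl s0 0 (n + k).+1 (mg n (setx x n a) z)).
- move=> x x' h; congr (cyl _ _ _ _); apply: funext => j; rewrite /mg.
  case: ifP => // jn; rewrite /setx; case: eqP => // /eqP jn'.
  by apply: h; rewrite ltn_neqAle jn' -ltnS jn.
- move=> x x' i ilt xx; apply/seteqP; split=> w // [h1 h2].
  have hi : (0 <= i < 0 + (n + k).+1)%N.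
    by rewrite leq0n add0n ltnS (leq_trans (ltnW ilt)) // leq_addr.
  move: (h1 i hi) (h2 i hi); rewrite /mg ltnS (ltnW ilt) !setx_ne ?(ltn_eqF ilt) // => -> e.
  by move: xx; rewrite e eqxx.
- by move=> x; exact: cyl_meas.
have -> : [set w | exists x, cyl s0 0 (n + k).+1 (mg n (setx x n a) z) w] =
    evt s0 n a `&` cyl s0 n.+1 k z.
  apply/seteqP; split=> w /=.
    move=> [x h]; split.
      have := h n; rewrite /mg ltnSn setx_at; apply.
      by rewrite leq0n add0n ltnS leq_addr.
    move=> i /andP[hi1 hi2].
    have hn : (i < n.+1)%N = false by rewrite ltnNge hi1.
    have := h i; rewrite /mg hn; apply.
    by rewrite leq0n add0n -addSn.
  move=> [e h]; exists (SP w) => i /andP[_]; rewrite add0n => ilt; rewrite /mg.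
  case: ltnP => hi.
    rewrite /setx /SP; case: eqP => [->|//]; exact: e.
  by apply: h; rewrite hi /= addSn.
move=> mU ->; split => //.
under sumN_ext do rewrite Pcyl Mt_merge setx_at.
rewrite (sumN_ext def _ (fun x => mulrC _ _)) sumN_scale IV mulrC //.
Qed.

Lemma X1set n k a y z :
  cyl tt 0 n.+1 y `&` evt ss n a `&` cyl ss n.+1 k z =
  [set w : Omega0 * R | cyl s0 n.+1 k z w.1 /\
     (if SP w.1 n == a then PS def rr n.+1 (SP w.1) y else set0) w.2].
Proof.
apply/seteqP; split=> w /=.
  move=> [[h e] c]; rewrite /evt /ss /= in e; rewrite /SP e eqxx; split; first exact: c.
  move=> i ilt; apply: h; by rewrite leq0n add0n.
move=> [c]; rewrite /SP; case: eqP => [e h|_ []]; split; last exact: c.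
split; last exact: e.
by move=> i /andP[_]; rewrite add0n => ilt; apply: h.
Qed.

Lemma P4 n a y k z :
  (PP (cyl tt 0 n.+1 y `&` evt ss n a `&` cyl ss n.+1 k z) * PP (evt ss n a)
  = PP (cyl tt 0 n.+1 y `&` evt ss n a) * PP (evt ss n a `&` cyl ss n.+1 k z))%E.
Proof.
have [m1 f1] := EA n a y (cylg_meas n.+1 k z).
rewrite -X1set in m1 f1.
have e2 : evt ss n a = fst @^-1` (evt s0 n a `&` cyl s0 n.+1 0 z).
  apply/seteqP; split=> w /=; last by case.
  by move=> e; split => // i; rewrite addn0 => /andP[h1 h2]; move: (leq_trans h2 h1); rewrite ltnn.
have e4 : evt ss n a `&` cyl ss n.+1 k z = fst @^-1` (evt s0 n a `&` cyl s0 n.+1 k z) by [].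
have [mA2 fA2] := Pev n 0 z a.
have [mA4 fA4] := Pev n k z a.
have X1E : PP (cyl tt 0 n.+1 y `&` evt ss n a `&` cyl ss n.+1 k z) = (W n k z a * g n a y)%:E.
  apply: (eq_trans (PP_fin m1)); f_equal; apply: (eq_trans f1).
  rewrite /g -sumN_scale; apply: sumN_ext => x.
  rewrite cyl_merge Pcyl Mt_merge; case: eqP => [->|_]; first by ring.
  by have -> : (false%:R : R) = 0 by []; ring.
have X2E : PP (evt ss n a) = (m a)%:E.
  rewrite e2 (push mA2) (P0_fin mA2) fA2 /W big_ord0 mulr1 //.
have X3E : PP (cyl tt 0 n.+1 y `&` evt ss n a) = (g n a y)%:E.
  by rewrite setIC P3_PE.
have X4E : PP (evt ss n a `&` cyl ss n.+1 k z) = (m a * W n k z a)%:E.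
  by rewrite e4 (push mA4) (P0_fin mA4) fA4.
rewrite X1E X2E X3E X4E -!EFinM; f_equal; ring.
Qed.

Lemma main_inside :
    measurable_fun setT (@fst Omega0 R) /\
    (forall A, measurable A -> PP (fst @^-1` A) = P0 A) /\
    rv_process tt /\
    (forall n x, PP (cyl tt 0 n x) = PP (cyl ss 0 n x)) /\
    (forall n a b, PP (evt ss n a `&` evt tt n b) = (mu a b)%:E) /\
    (forall n a y, PP (evt ss n a `&` cyl tt 0 n.+1 y)
                   = ((mu_cond m mu a (y n))%:E * PP (cyl tt 0 n.+1 y))%E) /\
    (forall n a y k z,
        (PP (cyl tt 0 n.+1 y `&` evt ss n a `&` cyl ss n.+1 k z) * PP (evt ss n a)
        = PP (cyl tt 0 n.+1 y `&` evt ss n a) * PP (evt ss n a `&` cyl ss n.+1 k z))%E).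
Proof.
split; first exact: fst_meas.
split; first exact: push.
split; first exact: tt_rv.
split; first exact: P1.
split; first exact: P2.
split; first exact: P3.
exact: P4.
Qed.

End Main.
End Alg.

Local Open Scope ereal_scope.

Theorem lemma7 (R : realType) (S : finType) (p : S -> S -> R) (m : S -> R)
  (hp : stochastic p) (hirr : irreducible p) (hap : aperiodic p)
  (hm : prob_vector m) (hinv : invariant_law p m) (hfull : full_support m)
  (d0 : measure_display) (Omega0 : measurableType d0) (P0 : probability Omega0 R)
  (s0 : nat -> Omega0 -> S) (hs0 : rv_process s0) (hmc : markov_chain P0 m p s0)
  (mu : S -> S -> R) (hmu : inM' p m mu) :
  exists (d : measure_display) (Omega : measurableType d) (P : probability Omega R)
         (pi : Omega -> Omega0) (t : nat -> Omega -> S),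
    let s := fun n w => s0 n (pi w) in
    (* enlargement: pi is measurable and pushes P forward to P0 *)
    measurable_fun setT pi /\
    (forall A, measurable A -> P (pi @^-1` A) = P0 A) /\
    rv_process t /\
    (* (P1) law of (t_n) equals law of (s_n) *)
    (forall n x, P (cyl t 0 n x) = P (cyl s 0 n x)) /\
    (* (P2) law of (s_n, t_n) is mu *)
    (forall n a b, P (evt s n a `&` evt t n b) = (mu a b)%:E) /\
    (* (P3) conditional law of s_n given (t_1..t_n) is mu(. | t_n) *)
    (forall n a y, P (evt s n a `&` cyl t 0 n.+1 y)
                   = (mu_cond m mu a (y n))%:E * P (cyl t 0 n.+1 y)) /\
    (* (P4) given s_n, (t_1..t_n) independent of (s_{n+1}, s_{n+2}, ...) *)
    (forall n a y k z,
        P (cyl t 0 n.+1 y `&` evt s n a `&` cyl s n.+1 k z) * P (evt s n a)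
        = P (cyl t 0 n.+1 y `&` evt s n a) * P (evt s n a `&` cyl s n.+1 k z)).
Proof.
have [def _] : exists a : S, true.
  case: (pickP (fun _ : S => true)) => [a _|h]; first by exists a.
  move: (proj2 hm); rewrite big1 => [/eqP|x _]; last by have := h x.
  by rewrite eq_sym oner_eq0.
exists _, _, (P0 \x @Uni R)%E, fst, (tt p m mu def s0).
exact: (main_inside def hp hfull hinv hmu hs0 hmc).
Qed.
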